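(* There exists a transcendental entire function $f$ such that $f^{(s)}(\overline{\mathbb{Q}}) \subseteq \mathbb{Q}(i)$ for all integers $s \geq 0$.
   Context: $\overline{\mathbb{Q}}$ denotes the set of algebraic numbers in $\mathbb{C}$. A transcendental entire function is an entire function $\mathbb{C}\to\mathbb{C}$ that is not a polynomial. $f^{(s)}$ denotes the $s$-th derivative of $f$, with $f^{(0)}=f$. *)

(* Defs.v *)
From Stdlib Require Import Reals QArith ZArith List Lra.
Open Scope R_scope.

Definition CC : Type := (R * R)%type.
Definition Cre (z : CC) : R := fst z.
Definition Cim (z : CC) : R := snd z.
Definition Cof (x : R) : CC := (x, 0).
Definition C0 : CC := (0, 0).
Definition C1 : CC := (1, 0).
Definition Ci : CC := (0, 1).
Definition Cadd (z w : CC) : CC := (fst z + fst w, snd z + snd w).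
Definition Copp (z : CC) : CC := (- fst z, - snd z).
Definition Csub (z w : CC) : CC := Cadd z (Copp w).
Definition Cmul (z w : CC) : CC :=
  (fst z * fst w - snd z * snd w, fst z * snd w + snd z * fst w).
Definition Cnorm (z : CC) : R := sqrt (fst z * fst z + snd z * snd z).

Fixpoint Cpoly_eval (cs : list CC) (z : CC) : CC :=
  match cs with
  | nil => C0
  | c :: cs' => Cadd c (Cmul z (Cpoly_eval cs' z))
  end.

Definition Cderiv_at (f : CC -> CC) (z l : CC) : Prop :=
  forall eps : R, 0 < eps -> exists delta : R, 0 < delta /\
    forall h : CC, 0 < Cnorm h -> Cnorm h < delta ->
      Cnorm (Csub (Csub (f (Cadd z h)) (f z)) (Cmul l h)) <= eps * Cnorm h.

Definition entire (f : CC -> CC) : Prop :=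
  forall z : CC, exists l : CC, Cderiv_at f z l.

Definition is_polynomial_fun (f : CC -> CC) : Prop :=
  exists cs : list CC, forall z : CC, f z = Cpoly_eval cs z.

Definition transcendental_entire (f : CC -> CC) : Prop :=
  entire f /\ ~ is_polynomial_fun f.

Definition derivs_of (f : CC -> CC) (D : nat -> CC -> CC) : Prop :=
  D O = f /\ forall (s : nat) (z : CC), Cderiv_at (D s) z (D (S s) z).

Definition algebraic (z : CC) : Prop :=
  exists cs : list Z, (exists c, In c cs /\ c <> 0%Z) /\
    Cpoly_eval (map (fun c => Cof (IZR c)) cs) z = C0.

Definition in_Qi (z : CC) : Prop :=
  exists p q : Q, z = (Q2R p, Q2R q).

(* Main.v *)
Require Import Defs.
From Stdlib Require Import Reals QArith ZArith List Lra Lia Psatz Classical ClassicalEpsilon FunctionalExtensionality Cantor.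
Open Scope R_scope.


Lemma Cext (a b : CC) : fst a = fst b -> snd a = snd b -> a = b.
Proof. destruct a, b; simpl; intros; subst; reflexivity. Qed.

Ltac Csimpl := repeat match goal with z : CC |- _ => destruct z end;
  unfold Cadd, Cmul, Csub, Copp, Cof, C0, Defs.C1, Ci in *; simpl in *.
Ltac Cring := Csimpl; apply Cext; simpl; ring.

Lemma Cnorm_nonneg z : 0 <= Cnorm z.
Proof. apply sqrt_pos. Qed.

Lemma Cnorm_sq z : Cnorm z * Cnorm z = fst z * fst z + snd z * snd z.
Proof. unfold Cnorm. apply sqrt_sqrt. nra. Qed.

Lemma Cnorm_mul a b : Cnorm (Cmul a b) = Cnorm a * Cnorm b.
Proof. unfold Cnorm. rewrite <- sqrt_mult_alt by nra. f_equal. Csimpl. ring. Qed.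

Lemma Cnorm_le_sq z r : 0 <= r -> fst z * fst z + snd z * snd z <= r * r -> Cnorm z <= r.
Proof. intros H1 H2. unfold Cnorm. rewrite <- (sqrt_square r) by lra. apply sqrt_le_1_alt. lra. Qed.

Lemma Cnorm_triangle a b : Cnorm (Cadd a b) <= Cnorm a + Cnorm b.
Proof.
  apply Cnorm_le_sq. pose proof (Cnorm_nonneg a); pose proof (Cnorm_nonneg b); lra.
  pose proof (Cnorm_sq a); pose proof (Cnorm_sq b); pose proof (Cnorm_nonneg a); pose proof (Cnorm_nonneg b).
  destruct a as [a1 a2], b as [b1 b2]; simpl in *.
  assert (Hc : a1*b1 + a2*b2 <= Cnorm (a1,a2) * Cnorm (b1,b2)).
  { assert ((a1*b1+a2*b2)*(a1*b1+a2*b2) <= (Cnorm (a1,a2) * Cnorm (b1,b2))*(Cnorm (a1,a2) * Cnorm (b1,b2))).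
    { replace ((Cnorm (a1,a2) * Cnorm (b1,b2))*(Cnorm (a1,a2) * Cnorm (b1,b2))) with
       ((Cnorm (a1,a2) * Cnorm (a1,a2))*(Cnorm (b1,b2) * Cnorm (b1,b2))) by ring.
      rewrite H, H0. pose proof (Rle_0_sqr (a1*b2 - a2*b1)). unfold Rsqr in *. nra. }
    assert (0 <= Cnorm (a1,a2) * Cnorm (b1,b2)) by nra. nra. }
  nra.
Qed.

Lemma Cnorm_opp a : Cnorm (Copp a) = Cnorm a.
Proof. unfold Cnorm; f_equal; Csimpl; ring. Qed.

Lemma Cnorm_sub a b : Cnorm (Csub a b) <= Cnorm a + Cnorm b.
Proof. unfold Csub. rewrite <- (Cnorm_opp b). apply Cnorm_triangle. Qed.

Lemma Cnorm_Cof x : Cnorm (Cof x) = Rabs x.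
Proof. unfold Cnorm, Cof; simpl. rewrite <- sqrt_Rsqr_abs. unfold Rsqr. f_equal; ring. Qed.

Lemma Cnorm_fst z : Rabs (fst z) <= Cnorm z.
Proof. unfold Cnorm. rewrite <- sqrt_Rsqr_abs. apply sqrt_le_1_alt. unfold Rsqr. nra. Qed.
Lemma Cnorm_snd z : Rabs (snd z) <= Cnorm z.
Proof. unfold Cnorm. rewrite <- sqrt_Rsqr_abs. apply sqrt_le_1_alt. unfold Rsqr. nra. Qed.

Lemma Cnorm_le_parts z : Cnorm z <= Rabs (fst z) + Rabs (snd z).
Proof.
  apply Cnorm_le_sq. pose proof (Rabs_pos (fst z)); pose proof (Rabs_pos (snd z)); lra.
  pose proof (Rabs_pos (fst z)); pose proof (Rabs_pos (snd z)).
  assert (Rabs (fst z) * Rabs (fst z) = fst z * fst z) by (rewrite <- Rabs_mult; apply Rabs_right; nra).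
  assert (Rabs (snd z) * Rabs (snd z) = snd z * snd z) by (rewrite <- Rabs_mult; apply Rabs_right; nra).
  nra.
Qed.

Lemma Cnorm_C0 : Cnorm C0 = 0.
Proof. unfold Cnorm, C0; simpl. replace (0*0+0*0) with 0 by ring. apply sqrt_0. Qed.

Lemma Cnorm_eq0 z : Cnorm z = 0 -> z = C0.
Proof.
  intro H. pose proof (Cnorm_sq z). rewrite H in H0.
  destruct z as [a b]; simpl in *. unfold C0. f_equal; nra.
Qed.

Lemma Cnorm_pos z : z <> C0 -> 0 < Cnorm z.
Proof. intro H. destruct (Cnorm_nonneg z); auto. symmetry in H0. apply Cnorm_eq0 in H0. tauto. Qed.

Lemma Cmul_neq0 a b : a <> C0 -> b <> C0 -> Cmul a b <> C0.
Proof.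
  intros Ha Hb E. apply Cnorm_pos in Ha. apply Cnorm_pos in Hb.
  assert (Cnorm (Cmul a b) = 0) by (rewrite E; apply Cnorm_C0).
  rewrite Cnorm_mul in H. nra.
Qed.

Lemma Cmul_eq0 a b : Cmul a b = C0 -> a = C0 \/ b = C0.
Proof.
  intro E. destruct (classic (a = C0)); auto. destruct (classic (b = C0)); auto.
  exfalso; apply (Cmul_neq0 a b); auto.
Qed.

Definition Fam := nat -> CC -> CC.
Definition crem (F : Fam) s z h := Csub (Csub (F s (Cadd z h)) (F s z)) (Cmul (F (S s) z) h).
Definition Good (F : Fam) :=
  (exists N, forall s z, (N <= s)%nat -> F s z = C0) /\
  forall R, exists K, 0 <= K /\ forall s z h, Cnorm z <= R -> Cnorm h <= 1 ->
     Cnorm (F s z) <= K /\ Cnorm (crem F s z h) <= K * (Cnorm h * Cnorm h).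

Lemma rem_deriv (f : CC -> CC) (l z : CC) K : 0 <= K ->
  (forall h, Cnorm h <= 1 -> Cnorm (Csub (Csub (f (Cadd z h)) (f z)) (Cmul l h)) <= K * (Cnorm h*Cnorm h)) ->
  Cderiv_at f z l.
Proof.
  intros HK H eps Heps. exists (Rmin 1 (eps / (K+1))). split.
  - apply Rmin_pos; [lra|]. apply Rdiv_lt_0_compat; lra.
  - intros h Hh1 Hh2. pose proof (Rmin_l 1 (eps/(K+1))). pose proof (Rmin_r 1 (eps/(K+1))).
    eapply Rle_trans. apply H. lra.
    assert (Cnorm h * (K+1) <= eps).
    { assert (Cnorm h <= eps/(K+1)) by lra. apply (Rmult_le_compat_r (K+1)) in H2; [|lra].
      unfold Rdiv in H2. rewrite Rmult_assoc, Rinv_l in H2 by lra. lra. }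
    nra.
Qed.

Lemma Good_deriv F s z : Good F -> Cderiv_at (F s) z (F (S s) z).
Proof.
  intros [_ HG]. destruct (HG (Cnorm z)) as [K [HK HB]].
  apply (rem_deriv _ _ _ K HK). intros h Hh. apply (HB s z h); lra.
Qed.

Lemma Cderiv_unique f z l1 l2 : Cderiv_at f z l1 -> Cderiv_at f z l2 -> l1 = l2.
Proof.
  intros H1 H2. apply NNPP; intro Hne.
  assert (Hd : Csub l1 l2 <> C0).
  { intro E; apply Hne. destruct l1, l2; unfold Csub, Cadd, Copp, C0 in E; simpl in E.
    injection E; intros; f_equal; lra. }
  apply Cnorm_pos in Hd. set (e := Cnorm (Csub l1 l2) / 4).
  assert (He : 0 < e) by (unfold e; lra).
  destruct (H1 e He) as [d1 [Hd1 P1]]. destruct (H2 e He) as [d2 [Hd2 P2]].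
  set (t := Rmin d1 d2 / 2). assert (Ht : 0 < t) by (unfold t; pose proof (Rmin_pos d1 d2 Hd1 Hd2); lra).
  set (h := (t, 0) : CC).
  assert (Hn : Cnorm h = t). { unfold h. change (t,0) with (Cof t). rewrite Cnorm_Cof. apply Rabs_right; lra. }
  assert (Hlt1 : Cnorm h < d1) by (rewrite Hn; unfold t; pose proof (Rmin_l d1 d2); lra).
  assert (Hlt2 : Cnorm h < d2) by (rewrite Hn; unfold t; pose proof (Rmin_r d1 d2); lra).
  specialize (P1 h ltac:(lra) Hlt1). specialize (P2 h ltac:(lra) Hlt2).
  assert (E : Cmul (Csub l1 l2) h =
     Csub (Csub (Csub (f (Cadd z h)) (f z)) (Cmul l2 h)) (Csub (Csub (f (Cadd z h)) (f z)) (Cmul l1 h))).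
  { generalize (f (Cadd z h)) (f z). intros. Cring. }
  pose proof (Cnorm_sub (Csub (Csub (f (Cadd z h)) (f z)) (Cmul l2 h)) (Csub (Csub (f (Cadd z h)) (f z)) (Cmul l1 h))).
  rewrite <- E, Cnorm_mul in H. unfold e in *. nra.
Qed.

Definition mulLin (b : CC) (F : Fam) : Fam := fun s z =>
  Cadd (Cmul (Cof (INR s)) (F (pred s) z)) (Cmul (Csub z b) (F s z)).
Definition oneF : Fam := fun s z => match s with O => Defs.C1 | _ => C0 end.
Definition zeroF : Fam := fun _ _ => C0.
Definition addC (c : CC) (F : Fam) : Fam := fun s z => match s with O => Cadd c (F O z) | _ => F s z end.

Lemma mulLin_rem_id (n : R) a b' c d e z h bb :
  Csub (Csub (Cadd (Cmul (Cof n) a) (Cmul (Csub (Cadd z h) bb) d)) (Cadd (Cmul (Cof n) b') (Cmul (Csub z bb) c)))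
       (Cmul (Cadd (Cmul (Cof (n+1)) c) (Cmul (Csub z bb) e)) h)
  = Cadd (Cadd (Cmul (Cof n) (Csub (Csub a b') (Cmul c h))) (Cmul (Csub z bb) (Csub (Csub d c) (Cmul e h))))
         (Cmul h (Csub d c)).
Proof. Cring. Qed.

Lemma Cnorm_add3 a b c : Cnorm (Cadd (Cadd a b) c) <= Cnorm a + Cnorm b + Cnorm c.
Proof. pose proof (Cnorm_triangle (Cadd a b) c); pose proof (Cnorm_triangle a b); lra. Qed.

Lemma Cnorm_zsub z b R : Cnorm z <= R -> Cnorm (Csub z b) <= R + Cnorm b.
Proof. intros; pose proof (Cnorm_sub z b); lra. Qed.

Lemma Good_mulLin b F : Good F -> Good (mulLin b F).
Proof.
  intros [[N HN] HB]. split.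
  - exists (S N). intros s z Hs. unfold mulLin. rewrite (HN (pred s)) by lia. rewrite (HN s) by lia. Cring.
  - intros R. destruct (HB R) as [K [HK HB']].
    assert (HR : 0 <= R \/ R < 0) by lra. destruct HR as [HR|HR].
    2:{ exists 0. split; [lra|]. intros s z h Hz. pose proof (Cnorm_nonneg z). lra. }
    exists ((INR N + R + Cnorm b + 3) * K). pose proof (pos_INR N). pose proof (Cnorm_nonneg b).
    split; [nra|]. intros s z h Hz Hh.
    pose proof (Cnorm_nonneg h).
    destruct (HB' s z h Hz Hh) as [B1 B2].
    assert (Hc1 : Cnorm (Cmul (Cof (INR s)) (F (pred s) z)) <= INR N * K).
    { rewrite Cnorm_mul, Cnorm_Cof, Rabs_right by (apply Rle_ge, pos_INR).
      destruct (le_lt_dec s N) as [Hs|Hs].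
      - destruct (HB' (pred s) z h Hz Hh) as [Cb1 _]. apply le_INR in Hs.
        apply Rmult_le_compat; auto using pos_INR, Cnorm_nonneg.
      - rewrite (HN (pred s)) by lia. rewrite Cnorm_C0. nra. }
    split.
    + unfold mulLin. eapply Rle_trans. apply Cnorm_triangle.
      rewrite (Cnorm_mul (Csub z b)). pose proof (Cnorm_zsub z b R Hz).
      assert (Cnorm (Csub z b) * Cnorm (F s z) <= (R + Cnorm b) * K).
      { apply Rmult_le_compat; auto using Cnorm_nonneg. }
      assert ((INR N + R + Cnorm b + 3)*K = INR N*K + (R+Cnorm b)*K + 3*K) by ring. lra.
    + unfold crem, mulLin. simpl (pred (S s)). rewrite S_INR. rewrite mulLin_rem_id.
      eapply Rle_trans. apply Cnorm_add3. rewrite !Cnorm_mul.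
      assert (T1 : Cnorm (Cof (INR s)) * Cnorm (Csub (Csub (F (pred s) (Cadd z h)) (F (pred s) z)) (Cmul (F s z) h))
                   <= INR N * K * (Cnorm h * Cnorm h)).
      { rewrite Cnorm_Cof, Rabs_right by (apply Rle_ge, pos_INR).
        destruct s as [|s'].
        - change (INR 0) with 0. pose proof (Cnorm_nonneg (Csub (Csub (F 0%nat (Cadd z h)) (F 0%nat z)) (Cmul (F 0%nat z) h))). rewrite Rmult_0_l. apply Rmult_le_pos; [apply Rmult_le_pos|]; auto using pos_INR; nra.
        - simpl pred. destruct (le_lt_dec (S s') N) as [Hs|Hs].
          + destruct (HB' s' z h Hz Hh) as [_ C2']. unfold crem in C2'. apply le_INR in Hs.
            rewrite Rmult_assoc. apply Rmult_le_compat; auto using pos_INR, Cnorm_nonneg.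
          + rewrite (HN s') by lia. rewrite (HN s') by lia. rewrite (HN (S s')) by lia.
            replace (Csub (Csub C0 C0) (Cmul C0 h)) with C0 by Cring. rewrite Cnorm_C0, Rmult_0_r. apply Rmult_le_pos; [apply Rmult_le_pos|]; auto using pos_INR; nra. }
      assert (T2 : Cnorm (Csub z b) * Cnorm (crem F s z h) <= (R + Cnorm b) * (K * (Cnorm h * Cnorm h))).
      { apply Rmult_le_compat; auto using Cnorm_nonneg, Cnorm_zsub. }
      assert (T3 : Cnorm (Csub (F s (Cadd z h)) (F s z)) <= 2 * K * Cnorm h).
      { replace (Csub (F s (Cadd z h)) (F s z)) with (Cadd (crem F s z h) (Cmul (F (S s) z) h))
          by (unfold crem; generalize (F s (Cadd z h)) (F s z) (F (S s) z); intros; Cring).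
        eapply Rle_trans. apply Cnorm_triangle. rewrite Cnorm_mul.
        destruct (HB' (S s) z h Hz Hh) as [C3 _].
        assert (Cnorm (F (S s) z) * Cnorm h <= K * Cnorm h) by (apply Rmult_le_compat_r; auto).
        assert (Cnorm h * Cnorm h <= Cnorm h) by nra. nra. }
      unfold crem in T2.
      assert (Cnorm h * Cnorm (Csub (F s (Cadd z h)) (F s z)) <= Cnorm h * (2 * K * Cnorm h))
        by (apply Rmult_le_compat_l; auto).
      nra.
Qed.

Lemma Good_one : Good oneF.
Proof.
  split.
  - exists 1%nat. intros s z Hs. destruct s; [lia|reflexivity].
  - intros R. exists 1. split; [lra|]. intros s z h _ Hh. pose proof (Cnorm_nonneg h).
    unfold crem, oneF. destruct s.
    + split. unfold Cnorm, Defs.C1; simpl. replace (1*1+0*0) with 1 by ring. rewrite sqrt_1; lra.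
      replace (Csub (Csub Defs.C1 Defs.C1) (Cmul C0 h)) with C0 by Cring. rewrite Cnorm_C0. nra.
    + split. rewrite Cnorm_C0; lra.
      replace (Csub (Csub C0 C0) (Cmul C0 h)) with C0 by Cring. rewrite Cnorm_C0. nra.
Qed.

Lemma Good_zero : Good zeroF.
Proof.
  split. exists 0%nat; reflexivity.
  intros R. exists 0. split; [lra|]. intros. unfold crem, zeroF.
  replace (Csub (Csub C0 C0) (Cmul C0 h)) with C0 by Cring. rewrite Cnorm_C0. nra.
Qed.

Lemma Good_addC c F : Good F -> Good (addC c F).
Proof.
  intros [[N HN] HB]. split.
  - exists (S N). intros s z Hs. destruct s; [lia|]. apply HN; lia.
  - intros R. destruct (HB R) as [K [HK HB']]. exists (Cnorm c + K).
    pose proof (Cnorm_nonneg c). split; [lra|]. intros s z h Hz Hh.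
    destruct (HB' s z h Hz Hh) as [B1 B2]. pose proof (Cnorm_nonneg h).
    unfold crem, addC in *. destruct s.
    + split. eapply Rle_trans. apply Cnorm_triangle. lra.
      replace (Csub (Csub (Cadd c (F 0%nat (Cadd z h))) (Cadd c (F 0%nat z))) (Cmul (F 1%nat z) h))
        with (Csub (Csub (F 0%nat (Cadd z h)) (F 0%nat z)) (Cmul (F 1%nat z) h))
        by (generalize (F 0%nat (Cadd z h)) (F 0%nat z) (F 1%nat z); intros; Cring).
      nra.
    + split; nra.
Qed.

Fixpoint polyFam (cs : list CC) : Fam :=
  match cs with nil => zeroF | c :: q => addC c (mulLin C0 (polyFam q)) end.

Lemma polyFam_good cs : Good (polyFam cs).
Proof. induction cs; simpl. apply Good_zero. apply Good_addC, Good_mulLin, IHcs. Qed.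

Lemma polyFam_eval cs z : polyFam cs O z = Cpoly_eval cs z.
Proof.
  induction cs; simpl. reflexivity. unfold addC, mulLin. simpl. rewrite IHcs.
  generalize (Cpoly_eval cs z). intros. Cring.
Qed.

Definition Vz (b : CC) (k : nat) (F : Fam) := forall s, (s < k)%nat -> F s b = C0.

Lemma V_mulLin_other g b k F : Vz b k F -> Vz b k (mulLin g F).
Proof.
  intros H s Hs. unfold mulLin. rewrite (H (pred s)) by lia. rewrite (H s) by lia. Cring.
Qed.

Lemma V_mulLin_same b k F : Vz b k F -> Vz b (S k) (mulLin b F).
Proof.
  intros H s Hs. unfold mulLin. destruct s.
  - change (INR 0) with 0. generalize (F (pred 0) b) (F 0%nat b); intros. Cring.
  - rewrite (H (pred (S s))) by (simpl; lia). generalize (F (S s) b); intros. Cring.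
Qed.

Definition powLin (b : CC) (k : nat) (F : Fam) : Fam := Nat.iter k (mulLin b) F.

Lemma V0 b F : Vz b 0 F.
Proof. intros s Hs; lia. Qed.

Lemma V_powLin_same b k F : Vz b k (powLin b k F).
Proof. induction k. apply V0. simpl. apply V_mulLin_same, IHk. Qed.

Lemma V_powLin_other g j b k F : Vz b k F -> Vz b k (powLin g j F).
Proof. intros H; induction j. exact H. simpl. apply V_mulLin_other, IHj. Qed.

Lemma Good_powLin b k F : Good F -> Good (powLin b k F).
Proof. intros H; induction k. exact H. simpl. apply Good_mulLin, IHk. Qed.

Lemma powLin_top b k F : powLin b k F k b = Cmul (Cof (INR (fact k))) (F O b).
Proof.
  induction k.
  - simpl. generalize (F 0%nat b); intros. Cring.
  - change (powLin b (S k) F) with (mulLin b (powLin b k F)). unfold mulLin. simpl pred.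
    rewrite IHk. rewrite fact_simpl, mult_INR. generalize (F 0%nat b) (powLin b k F (S k) b); intros. Cring.
Qed.

Lemma Csub_neq0 a b : a <> b -> Csub a b <> C0.
Proof.
  intros H E; apply H. destruct a, b; unfold Csub, Cadd, Copp, C0 in E; simpl in E.
  injection E; intros; f_equal; lra.
Qed.

Lemma powLin_0_neq g j F b : b <> g -> F O b <> C0 -> powLin g j F O b <> C0.
Proof.
  intros Hbg HF. induction j. exact HF.
  change (powLin g (S j) F) with (mulLin g (powLin g j F)). unfold mulLin.
  replace (Cadd (Cmul (Cof (INR 0)) (powLin g j F (pred 0) b)) (Cmul (Csub b g) (powLin g j F 0%nat b)))
    with (Cmul (Csub b g) (powLin g j F 0%nat b))
    by (change (INR 0) with 0; generalize (powLin g j F (pred 0) b) (powLin g j F 0%nat b); intros; Cring).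
  apply Cmul_neq0; auto. apply Csub_neq0; auto.
Qed.

Definition Ceq_dec (a b : CC) : {a = b} + {a <> b}.
Proof.
  destruct a as [a1 a2], b as [b1 b2].
  destruct (Req_EM_T a1 b1) as [E1|E1]; [destruct (Req_EM_T a2 b2) as [E2|E2]|].
  - left; subst; reflexivity.
  - right; intro E; injection E; intros; contradiction.
  - right; intro E; injection E; intros; contradiction.
Defined.

Fixpoint cnt (bt : nat -> CC) (a : CC) (n : nat) : nat :=
  match n with O => O | S k => (cnt bt a k + if Ceq_dec (bt k) a then 1 else 0)%nat end.

Lemma cnt_le bt a n : (cnt bt a n <= n)%nat.
Proof. induction n; simpl. lia. destruct (Ceq_dec (bt n) a); lia. Qed.

Lemma cnt_mono bt a n m : (n <= m)%nat -> (cnt bt a n <= cnt bt a m)%nat.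
Proof. induction 1. lia. simpl. lia. Qed.

Definition tt bt m := cnt bt (bt m) m.

Fixpoint prodPart (bt : nat -> CC) (m j : nat) : Fam :=
  match j with
  | O => oneF
  | S j' => if Ceq_dec (bt j') (bt m) then prodPart bt m j' else powLin (bt j') m (prodPart bt m j')
  end.

Definition Gm bt m : Fam := powLin (bt m) (tt bt m) (prodPart bt m m).

Lemma Good_prodPart bt m j : Good (prodPart bt m j).
Proof.
  induction j; simpl. apply Good_one. destruct (Ceq_dec (bt j) (bt m)); auto. apply Good_powLin; auto.
Qed.

Lemma Good_Gm bt m : Good (Gm bt m).
Proof. apply Good_powLin, Good_prodPart. Qed.

Lemma prodPart_V bt m j l : (l < j)%nat -> bt l <> bt m -> Vz (bt l) m (prodPart bt m j).
Proof.
  induction j; intros Hl Hne. lia. simpl.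
  destruct (Ceq_dec (bt j) (bt m)) as [E|E].
  - assert (l <> j) by (intro; subst; contradiction). apply IHj; auto. lia.
  - destruct (Nat.eq_dec l j) as [->|Hlj].
    + apply V_powLin_same.
    + apply V_powLin_other, IHj; auto. lia.
Qed.

Lemma Gm_vanish bt m l : (l < m)%nat -> Gm bt m (tt bt l) (bt l) = C0.
Proof.
  intros Hl. unfold Gm. destruct (Ceq_dec (bt l) (bt m)) as [E|E].
  - rewrite E. apply V_powLin_same. unfold tt. rewrite <- E.
    assert (cnt bt (bt l) (S l) <= cnt bt (bt l) m)%nat by (apply cnt_mono; lia).
    simpl in H. destruct (Ceq_dec (bt l) (bt l)); [|congruence]. lia.
  - apply (V_powLin_other (bt m) (tt bt m) (bt l) m). apply prodPart_V; auto. unfold tt. pose proof (cnt_le bt (bt l) l). lia.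
Qed.

Lemma prodPart_0 bt m j : prodPart bt m j O (bt m) <> C0.
Proof.
  induction j; simpl.
  - unfold oneF, Defs.C1, C0. intro E; injection E; lra.
  - destruct (Ceq_dec (bt j) (bt m)); auto. apply powLin_0_neq; auto.
Qed.

Lemma Gm_top bt m : Gm bt m (tt bt m) (bt m) <> C0.
Proof.
  unfold Gm. rewrite powLin_top. apply Cmul_neq0. 2: apply prodPart_0.
  unfold Cof, C0. intro E; injection E; intros. pose proof (fact_neq_0 (tt bt m)).
  apply H0. apply INR_eq. simpl. lra.
Qed.

Definition w (n : nat) : R := (/2)^n.
Lemma w_pos n : 0 < w n.
Proof. unfold w. apply pow_lt. lra. Qed.
Lemma sum_w n : sum_f_R0 w n = 2 - w n.
Proof. induction n; simpl. unfold w; simpl; lra. rewrite IHn. unfold w; simpl. lra. Qed.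
Lemma sum_w_le n : sum_f_R0 w n <= 2.
Proof. rewrite sum_w. pose proof (w_pos n); lra. Qed.

Definition dom (a : nat -> R) (C : R) := forall n, Rabs (a n) <= C * w n.

Lemma dom_C a C : dom a C -> 0 <= C.
Proof. intros H. specialize (H O). unfold w in H; simpl in H. pose proof (Rabs_pos (a O)). lra. Qed.

Lemma sum_scal (a : nat -> R) c n : sum_f_R0 (fun k => c * a k) n = c * sum_f_R0 a n.
Proof. induction n; simpl. ring. rewrite IHn. ring. Qed.

Lemma pos_series_cv (a : nat -> R) C : (forall n, 0 <= a n <= C * w n) -> exists l, Un_cv (sum_f_R0 a) l.
Proof.
  intros H. apply Un_cv_crit.
  - intro n. simpl. specialize (H (S n)). lra.
  - exists (2*C). intros x [i ->].
    assert (0 <= C) by (specialize (H O); unfold w in H; simpl in H; lra).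
    apply Rle_trans with (sum_f_R0 (fun n => C * w n) i).
    + apply sum_Rle. intros; apply H.
    + rewrite sum_scal. pose proof (sum_w_le i). nra.
Qed.

Lemma dom_cv a C : dom a C -> exists l, Un_cv (sum_f_R0 a) l.
Proof.
  intros H.
  destruct (pos_series_cv (fun n => (Rabs (a n) + a n)/2) C) as [l1 H1].
  { intro n. specialize (H n). pose proof (Rabs_pos (a n)). split.
    - pose proof (Rle_abs (- a n)) as Q. rewrite Rabs_Ropp in Q. lra.
    - pose proof (Rle_abs (a n)). lra. }
  destruct (pos_series_cv (fun n => (Rabs (a n) - a n)/2) C) as [l2 H2].
  { intro n. specialize (H n). pose proof (Rabs_pos (a n)). split.
    - pose proof (Rle_abs (a n)). lra.
    - pose proof (Rle_abs (- a n)) as Q. rewrite Rabs_Ropp in Q. lra. }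
  exists (l1 - l2). pose proof (CV_minus _ _ _ _ H1 H2) as H0.
  intros eps Heps. destruct (H0 eps Heps) as [N HN]. exists N. intros n Hn.
  specialize (HN n Hn).
  replace (sum_f_R0 a n) with (sum_f_R0 (fun n => (Rabs (a n) + a n)/2) n - sum_f_R0 (fun n => (Rabs (a n) - a n)/2) n); auto.
  rewrite <- minus_sum. apply sum_eq. intros; field.
Qed.

Lemma ex_lim_or (a : nat -> R) : exists l, (exists l', Un_cv (sum_f_R0 a) l') -> Un_cv (sum_f_R0 a) l.
Proof.
  destruct (classic (exists l', Un_cv (sum_f_R0 a) l')) as [[l' H]|H].
  - exists l'; auto.
  - exists 0; intro; contradiction.
Qed.

Definition RS (a : nat -> R) : R := proj1_sig (constructive_indefinite_description _ (ex_lim_or a)).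
Lemma RS_spec a : (exists l, Un_cv (sum_f_R0 a) l) -> Un_cv (sum_f_R0 a) (RS a).
Proof. unfold RS. destruct (constructive_indefinite_description _ _). simpl. auto. Qed.

Lemma RS_dom a C : dom a C -> Un_cv (sum_f_R0 a) (RS a).
Proof. intros H; apply RS_spec, (dom_cv a C H). Qed.

Lemma lim_bound u l B : Un_cv u l -> (forall n, Rabs (u n) <= B) -> Rabs l <= B.
Proof.
  intros Hu HB. apply Rnot_lt_le. intro Hlt.
  destruct (Hu (Rabs l - B)) as [N HN]. lra.
  specialize (HN N (le_n _)). specialize (HB N). unfold Rdist in HN.
  pose proof (Rabs_triang_inv l (u N)). rewrite <- Rabs_Ropp in HN.
  replace (- (u N - l)) with (l - u N) in HN by ring. lra.
Qed.

Lemma RS_bound a C : dom a C -> Rabs (RS a) <= 2 * C.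
Proof.
  intros H. apply (lim_bound (sum_f_R0 a)). apply (RS_dom a C H).
  intro n. eapply Rle_trans. apply sum_f_R0_triangle.
  apply Rle_trans with (sum_f_R0 (fun n => C * w n) n). apply sum_Rle; intros; apply H.
  rewrite sum_scal. pose proof (sum_w_le n). pose proof (dom_C a C H). nra.
Qed.

Lemma Un_cv_ext u v l : (forall n, u n = v n) -> Un_cv u l -> Un_cv v l.
Proof. intros E H eps He. destruct (H eps He) as [N HN]. exists N. intros n Hn. rewrite <- E. auto. Qed.

Lemma RS_lin a b x y Ca Cb : dom a Ca -> dom b Cb ->
  RS (fun n => x * a n + y * b n) = x * RS a + y * RS b.
Proof.
  intros Ha Hb.
  assert (Hc : Un_cv (sum_f_R0 (fun n => x * a n + y * b n)) (x * RS a + y * RS b)).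
  { assert (Kx : Un_cv (fun _ => x) x) by (intros eps H; exists O; intros; unfold Rdist; rewrite Rminus_diag, Rabs_R0; lra).
    assert (Ky : Un_cv (fun _ => y) y) by (intros eps H; exists O; intros; unfold Rdist; rewrite Rminus_diag, Rabs_R0; lra).
    pose proof (CV_plus _ _ _ _ (CV_mult _ _ _ _ Kx (RS_dom a Ca Ha)) (CV_mult _ _ _ _ Ky (RS_dom b Cb Hb))).
    eapply Un_cv_ext; [|exact H]. intro n. simpl. rewrite sum_plus, !sum_scal. reflexivity. }
  apply UL_sequence with (sum_f_R0 (fun n => x * a n + y * b n)); auto.
  apply RS_spec. eauto.
Qed.

Lemma sum_const_after a m : (forall n, (n > m)%nat -> a n = 0) -> forall n, (n >= m)%nat -> sum_f_R0 a n = sum_f_R0 a m.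
Proof.
  intros H n Hn. induction Hn. reflexivity. simpl. rewrite H by lia. rewrite IHHn. ring.
Qed.

Lemma RS_finite a m : (forall n, (n > m)%nat -> a n = 0) -> RS a = sum_f_R0 a m.
Proof.
  intros H. assert (Hc : Un_cv (sum_f_R0 a) (sum_f_R0 a m)).
  { intros eps He. exists m. intros n Hn. rewrite (sum_const_after a m H n Hn). unfold Rdist. rewrite Rminus_diag, Rabs_R0. lra. }
  apply UL_sequence with (sum_f_R0 a); auto. apply RS_spec; eauto.
Qed.

Definition CS (a : nat -> CC) : CC := (RS (fun n => fst (a n)), RS (fun n => snd (a n))).
Definition Cdom (a : nat -> CC) (C : R) := forall n, Cnorm (a n) <= C * w n.

Lemma Cdom_fst a C : Cdom a C -> dom (fun n => fst (a n)) C.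
Proof. intros H n. eapply Rle_trans. apply Cnorm_fst. apply H. Qed.
Lemma Cdom_snd a C : Cdom a C -> dom (fun n => snd (a n)) C.
Proof. intros H n. eapply Rle_trans. apply Cnorm_snd. apply H. Qed.

Lemma RS_ext a b : (forall n, a n = b n) -> RS a = RS b.
Proof. intros H. f_equal. apply functional_extensionality. auto. Qed.

Lemma Cdom_add a b Ca Cb : Cdom a Ca -> Cdom b Cb -> Cdom (fun n => Cadd (a n) (b n)) (Ca + Cb).
Proof. intros Ha Hb n. eapply Rle_trans. apply Cnorm_triangle. specialize (Ha n); specialize (Hb n). lra. Qed.

Lemma Cdom_scal c b Cb : Cdom b Cb -> Cdom (fun n => Cmul c (b n)) (Cnorm c * Cb).
Proof. intros Hb n. rewrite Cnorm_mul. rewrite Rmult_assoc. apply Rmult_le_compat_l. apply Cnorm_nonneg. apply Hb. Qed.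

Lemma CS_add a b Ca Cb : Cdom a Ca -> Cdom b Cb ->
  CS (fun n => Cadd (a n) (b n)) = Cadd (CS a) (CS b).
Proof.
  intros Ha Hb. unfold CS, Cadd. simpl. f_equal.
  - rewrite <- (Rmult_1_l (RS (fun n => fst (a n)))), <- (Rmult_1_l (RS (fun n => fst (b n)))).
    rewrite <- (RS_lin _ _ 1 1 _ _ (Cdom_fst a Ca Ha) (Cdom_fst b Cb Hb)). apply RS_ext. intros; ring.
  - rewrite <- (Rmult_1_l (RS (fun n => snd (a n)))), <- (Rmult_1_l (RS (fun n => snd (b n)))).
    rewrite <- (RS_lin _ _ 1 1 _ _ (Cdom_snd a Ca Ha) (Cdom_snd b Cb Hb)). apply RS_ext. intros; ring.
Qed.

Lemma CS_scal c b Cb : Cdom b Cb -> CS (fun n => Cmul c (b n)) = Cmul c (CS b).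
Proof.
  intros Hb. unfold CS, Cmul. simpl. f_equal.
  - replace (fst c * RS (fun n => fst (b n)) - snd c * RS (fun n => snd (b n)))
      with (fst c * RS (fun n => fst (b n)) + (- snd c) * RS (fun n => snd (b n))) by ring.
    rewrite <- (RS_lin _ _ _ _ _ _ (Cdom_fst b Cb Hb) (Cdom_snd b Cb Hb)). apply RS_ext. intros; ring.
  - rewrite <- (RS_lin _ _ _ _ _ _ (Cdom_snd b Cb Hb) (Cdom_fst b Cb Hb)). apply RS_ext. intros; ring.
Qed.

Lemma CS_ext a b : (forall n, a n = b n) -> CS a = CS b.
Proof. intros H. f_equal. apply functional_extensionality. auto. Qed.

Lemma CS_bound a C : Cdom a C -> Cnorm (CS a) <= 4 * C.
Proof.
  intros H. eapply Rle_trans. apply Cnorm_le_parts. unfold CS; simpl.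
  pose proof (RS_bound _ _ (Cdom_fst a C H)). pose proof (RS_bound _ _ (Cdom_snd a C H)). lra.
Qed.

Fixpoint csl (f : nat -> CC) (n : nat) : CC :=
  match n with O => C0 | S k => Cadd (csl f k) (f k) end.

Lemma csl_fst f m : fst (csl f (S m)) = sum_f_R0 (fun n => fst (f n)) m.
Proof. induction m. simpl. ring. change (fst (csl f (S (S m)))) with (fst (csl f (S m)) + fst (f (S m))). rewrite IHm. reflexivity. Qed.
Lemma csl_snd f m : snd (csl f (S m)) = sum_f_R0 (fun n => snd (f n)) m.
Proof. induction m. simpl. ring. change (snd (csl f (S (S m)))) with (snd (csl f (S m)) + snd (f (S m))). rewrite IHm. reflexivity. Qed.

Lemma CS_finite a m : (forall n, (n > m)%nat -> a n = C0) -> CS a = csl a (S m).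
Proof.
  intros H. unfold CS. apply Cext.
  - rewrite csl_fst. simpl fst. apply RS_finite. intros n Hn. rewrite H by auto. reflexivity.
  - rewrite csl_snd. simpl snd. apply RS_finite. intros n Hn. rewrite H by auto. reflexivity.
Qed.

Lemma CS_deriv (u v : nat -> CC -> CC) z C :
  (forall h, Cnorm h <= 1 -> Cdom (fun n => u n (Cadd z h)) C) ->
  Cdom (fun n => u n z) C -> Cdom (fun n => v n z) C ->
  (forall h, Cnorm h <= 1 -> forall n,
     Cnorm (Csub (Csub (u n (Cadd z h)) (u n z)) (Cmul (v n z) h)) <= C * w n * (Cnorm h * Cnorm h)) ->
  Cderiv_at (fun x => CS (fun n => u n x)) z (CS (fun n => v n z)).
Proof.
  intros H1 H2 H3 H4.
  assert (HC : 0 <= C) by (apply (dom_C _ _ (Cdom_fst _ _ H2))).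
  apply (rem_deriv _ _ _ (4 * C)). lra.
  intros h Hh.
  set (m1 := Cof (-1)).
  assert (Hm1 : Cdom (fun n => Cmul m1 (u n z)) (Cnorm m1 * C)) by (apply Cdom_scal; auto).
  assert (Hvh : Cdom (fun n => Cmul (Cmul m1 h) (v n z)) (Cnorm (Cmul m1 h) * C)) by (apply Cdom_scal; auto).
  assert (E : Csub (Csub (CS (fun n => u n (Cadd z h))) (CS (fun n => u n z))) (Cmul (CS (fun n => v n z)) h)
     = CS (fun n => Cadd (Cadd (u n (Cadd z h)) (Cmul m1 (u n z))) (Cmul (Cmul m1 h) (v n z)))).
  { rewrite (CS_add _ _ _ _ (Cdom_add _ _ _ _ (H1 h Hh) Hm1) Hvh).
    rewrite (CS_add _ _ _ _ (H1 h Hh) Hm1).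
    rewrite (CS_scal _ _ _ H2), (CS_scal _ _ _ H3).
    unfold m1. generalize (CS (fun n => u n (Cadd z h))) (CS (fun n => u n z)) (CS (fun n => v n z)). intros. Cring. }
  rewrite E.
  apply Rle_trans with (4 * (C * (Cnorm h * Cnorm h))); [|lra].
  apply CS_bound. intro n.
  replace (Cadd (Cadd (u n (Cadd z h)) (Cmul m1 (u n z))) (Cmul (Cmul m1 h) (v n z)))
    with (Csub (Csub (u n (Cadd z h)) (u n z)) (Cmul (v n z) h))
    by (unfold m1; generalize (u n (Cadd z h)) (u n z) (v n z); intros; Cring).
  specialize (H4 h Hh n). lra.
Qed.

Definition nonzeroL (p : list CC) := exists c, In c p /\ c <> C0.

Fixpoint synth (a : CC) (p : list CC) : list CC * CC :=
  match p with
  | nil => (nil, C0)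
  | c :: p' => match p' with
               | nil => (nil, c)
               | _ :: _ => let (q', r') := synth a p' in (r' :: q', Cadd c (Cmul a r'))
               end
  end.

Lemma synth_eval a p z : Cpoly_eval p z = Cadd (Cmul (Csub z a) (Cpoly_eval (fst (synth a p)) z)) (snd (synth a p)).
Proof.
  induction p as [|c p' IH]. simpl. Cring.
  destruct p' as [|d p''].
  - simpl. generalize c; intros. Cring.
  - change (synth a (c :: d :: p'')) with (let (q', r') := synth a (d :: p'') in (r' :: q', Cadd c (Cmul a r'))).
    destruct (synth a (d :: p'')) as [q' r'] eqn:E. simpl in IH |- *.
    change (Cpoly_eval (c :: d :: p'') z) with (Cadd c (Cmul z (Cpoly_eval (d :: p'') z))).
    rewrite IH. generalize (Cpoly_eval q' z); intros. Cring.
Qed.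

Lemma synth_len a p : length (fst (synth a p)) = pred (length p).
Proof.
  induction p as [|c p' IH]. reflexivity.
  destruct p' as [|d p'']. reflexivity.
  change (synth a (c :: d :: p'')) with (let (q', r') := synth a (d :: p'') in (r' :: q', Cadd c (Cmul a r'))).
  destruct (synth a (d :: p'')) as [q' r'] eqn:E. simpl in *. lia.
Qed.

Lemma synth_zero a p : Forall (eq C0) (fst (synth a p)) -> snd (synth a p) = C0 -> Forall (eq C0) p.
Proof.
  induction p as [|c p' IH]; intros H1 H2. constructor.
  destruct p' as [|d p''].
  - simpl in H2. constructor; auto.
  - change (synth a (c :: d :: p'')) with (let (q', r') := synth a (d :: p'') in (r' :: q', Cadd c (Cmul a r'))) in *.
    destruct (synth a (d :: p'')) as [q' r'] eqn:E. simpl in *. inversion H1; subst.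
    assert (c = C0). { rewrite <- H2. Cring. }
    constructor; auto.
Qed.

Lemma nonzero_or_zero p : nonzeroL p \/ Forall (eq C0) p.
Proof.
  destruct (classic (nonzeroL p)); auto. right. apply Forall_forall. intros x Hx.
  destruct (classic (C0 = x)); auto. exfalso; apply H; exists x; split; auto.
Qed.

Lemma not_nonzero p : Forall (eq C0) p -> ~ nonzeroL p.
Proof. intros H [c [Hc Hne]]. rewrite Forall_forall in H. apply Hne. symmetry. auto. Qed.

Lemma roots_fin n : forall p, (length p <= n)%nat -> nonzeroL p ->
  exists L, forall z, Cpoly_eval p z = C0 -> In z L.
Proof.
  induction n; intros p Hl Hnz.
  - destruct p; simpl in Hl; [|lia]. destruct Hnz as [c [[] _]].
  - destruct (classic (exists a, Cpoly_eval p a = C0)) as [[a Ha]|Hno].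
    2:{ exists nil. intros z Hz. apply Hno; eauto. }
    pose proof (synth_eval a p a) as E0. rewrite Ha in E0.
    assert (Hr : snd (synth a p) = C0).
    { rewrite E0. generalize (Cpoly_eval (fst (synth a p)) a) (snd (synth a p)). intros. Cring. }
    destruct (nonzero_or_zero (fst (synth a p))) as [Hq|Hq].
    2:{ exfalso. apply (not_nonzero p); auto. apply (synth_zero a); auto. }
    destruct (IHn (fst (synth a p))) as [L HL]; auto.
    { rewrite synth_len. lia. }
    exists (a :: L). intros z Hz. rewrite (synth_eval a p z), Hr in Hz.
    replace (Cadd (Cmul (Csub z a) (Cpoly_eval (fst (synth a p)) z)) C0) with
      (Cmul (Csub z a) (Cpoly_eval (fst (synth a p)) z)) in Hz
      by (generalize (Cpoly_eval (fst (synth a p)) z); intros; Cring).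
    destruct (Cmul_eq0 _ _ Hz) as [H|H].
    + left. destruct z, a; unfold Csub, Cadd, Copp, C0 in H; simpl in H. injection H; intros. f_equal; lra.
    + right; auto.
Qed.

Lemma roots_ex p : exists L, nonzeroL p -> forall z, Cpoly_eval p z = C0 -> In z L.
Proof.
  destruct (classic (nonzeroL p)) as [H|H].
  - destruct (roots_fin (length p) p (le_n _) H) as [L HL]. exists L; auto.
  - exists nil; intros; contradiction.
Qed.

Definition rootsL p : list CC := proj1_sig (constructive_indefinite_description _ (roots_ex p)).
Lemma rootsL_spec p z : nonzeroL p -> Cpoly_eval p z = C0 -> In z (rootsL p).
Proof. unfold rootsL. destruct (constructive_indefinite_description _ _). simpl. auto. Qed.

Definition rangeZ (H : nat) : list Z := map (fun k => (Z.of_nat k - Z.of_nat H)%Z) (seq 0 (2*H+1)).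

Lemma In_rangeZ c H : (Z.abs c <= Z.of_nat H)%Z -> In c (rangeZ H).
Proof.
  intros Hc. unfold rangeZ. apply in_map_iff. exists (Z.to_nat (c + Z.of_nat H)). split.
  - rewrite Z2Nat.id; lia.
  - apply in_seq. lia.
Qed.

Fixpoint lenL (H n : nat) : list (list Z) :=
  match n with
  | O => nil :: nil
  | S k => flat_map (fun c => map (cons c) (lenL H k)) (rangeZ H)
  end.

Lemma In_lenL H cs : Forall (fun c => (Z.abs c <= Z.of_nat H)%Z) cs -> In cs (lenL H (length cs)).
Proof.
  induction cs; intros Hf. simpl; auto.
  inversion Hf; subst. simpl. apply in_flat_map. exists a. split. apply In_rangeZ; auto.
  apply in_map. auto.
Qed.

Definition allL (H : nat) : list (list Z) := flat_map (lenL H) (seq 0 (S H)).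

Lemma cs_bound (cs : list Z) : exists H, (length cs <= H)%nat /\ Forall (fun c => (Z.abs c <= Z.of_nat H)%Z) cs.
Proof.
  induction cs. exists O. simpl; split; auto.
  destruct IHcs as [H [H1 H2]]. exists (S H + Z.to_nat (Z.abs a))%nat. split. simpl; lia.
  pose proof (Z2Nat.id (Z.abs a) (Z.abs_nonneg a)). constructor. lia. eapply Forall_impl; [|exact H2]. intros x Hx; cbv beta in *; lia.
Qed.

Definition Zpoly (cs : list Z) : list CC := map (fun c => Cof (IZR c)) cs.

Definition allRoots (H : nat) : list CC := flat_map (fun cs => rootsL (Zpoly cs)) (allL H).

Lemma algebraic_in z : algebraic z -> exists H, In z (allRoots H).
Proof.
  intros [cs [[c [Hc Hc0]] Hz]]. destruct (cs_bound cs) as [H [H1 H2]].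
  exists H. unfold allRoots. apply in_flat_map. exists cs. split.
  - unfold allL. apply in_flat_map. exists (length cs). split. apply in_seq. lia. apply In_lenL; auto.
  - apply rootsL_spec; auto. exists (Cof (IZR c)). split. apply (in_map (fun c => Cof (IZR c))); auto.
    unfold Cof, C0. intro E. injection E. intros. apply Hc0. apply eq_IZR. auto.
Qed.

Definition alg_enum (n : nat) : CC := let (H, k) := Cantor.of_nat n in nth k (allRoots H) C0.

Lemma alg_enum_surj z : algebraic z -> exists n, alg_enum n = z.
Proof.
  intros Hz. destruct (algebraic_in z Hz) as [H Hin]. destruct (In_nth _ _ C0 Hin) as [k [_ Hk]].
  exists (Cantor.to_nat (H, k)). unfold alg_enum. rewrite Cantor.cancel_of_to. auto.
Qed.

Definition bseq (m : nat) : CC := alg_enum (fst (Cantor.of_nat m)).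

Lemma bseq_inf n N : exists m, (N <= m)%nat /\ bseq m = alg_enum n.
Proof.
  exists (Cantor.to_nat (n, N)). split.
  - pose proof (Cantor.to_nat_non_decreasing n N). lia.
  - unfold bseq. rewrite Cantor.cancel_of_to. reflexivity.
Qed.

Lemma Q_between x d : 0 < d -> exists p : Q, x < Q2R p < x + d.
Proof.
  intros Hd. destruct (archimed (/ d)) as [HM _]. set (M := up (/ d)) in *.
  assert (HM0 : (0 < M)%Z). { apply lt_IZR. pose proof (Rinv_0_lt_compat d Hd). simpl. lra. }
  destruct (archimed (x * IZR M)) as [Hu1 Hu2]. set (u := up (x * IZR M)) in *.
  exists (Qmake u (Z.to_pos M)). unfold Q2R. simpl. rewrite Z2Pos.id by lia.
  assert (HMp : 0 < IZR M) by (apply IZR_lt; lia).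
  split.
  - apply (Rmult_lt_reg_r (IZR M)); auto. rewrite Rmult_assoc, Rinv_l by lra. lra.
  - apply (Rmult_lt_reg_r (IZR M)); auto. rewrite Rmult_assoc, Rinv_l by lra.
    assert (1 < d * IZR M).
    { apply (Rmult_lt_compat_l d) in HM; auto. rewrite Rinv_r in HM by lra. lra. }
    nra.
Qed.

Lemma Q_approx x d : 0 < d -> exists p : Q, Rabs (Q2R p - x) < d /\ Q2R p <> 0.
Proof.
  intros Hd. destruct (Rle_lt_dec 0 x) as [Hx|Hx].
  - destruct (Q_between x d Hd) as [p Hp]. exists p. split. rewrite Rabs_right; lra. lra.
  - destruct (Q_between x (Rmin d (-x)) ltac:(apply Rmin_pos; lra)) as [p Hp].
    pose proof (Rmin_l d (-x)). pose proof (Rmin_r d (-x)).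
    exists p. split. rewrite Rabs_right; lra. lra.
Qed.

Lemma Cchoose c d eta : exists x : CC, (0 < eta -> Cnorm x <= eta) /\
  (d <> C0 -> in_Qi (Cadd c (Cmul x d)) /\ Cadd c (Cmul x d) <> C0).
Proof.
  destruct (classic (d = C0)) as [Hd|Hd].
  { exists C0. split. rewrite Cnorm_C0; lra. intro; contradiction. }
  set (eta' := if Rlt_dec 0 eta then eta else 1).
  assert (He' : 0 < eta') by (unfold eta'; destruct (Rlt_dec 0 eta); lra).
  pose proof (Cnorm_pos d Hd) as Hnd.
  set (del := eta' * Cnorm d / 2).
  assert (Hdel : 0 < del) by (unfold del; nra).
  destruct (Q_approx (fst c) del Hdel) as [p1 [Hp1 Hp1']].
  destruct (Q_approx (snd c) del Hdel) as [p2 [Hp2 _]].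
  set (q := (Q2R p1, Q2R p2) : CC).
  set (n := fst d * fst d + snd d * snd d).
  assert (Hn : n <> 0). { unfold n. rewrite <- Cnorm_sq. nra. }
  set (dinv := (fst d / n, - snd d / n) : CC).
  set (x := Cmul (Csub q c) dinv).
  assert (Hxd : Cmul x d = Csub q c).
  { unfold x, dinv. destruct q as [q1 q2], c as [c1 c2], d as [d1 d2]. unfold n in *; simpl in *.
    unfold Csub, Cadd, Copp, Cmul; simpl. f_equal; field; auto. }
  exists x. split.
  - intros Heta. assert (eta' = eta) by (unfold eta'; destruct (Rlt_dec 0 eta); lra).
    assert (Hq : Cnorm (Csub q c) < 2 * del).
    { eapply Rle_lt_trans. apply Cnorm_le_parts. unfold q, Csub, Cadd, Copp; cbn [fst snd]. unfold Rminus in *. lra. }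
    assert (Cnorm x * Cnorm d < eta * Cnorm d).
    { rewrite <- Cnorm_mul, Hxd. unfold del in Hq. rewrite H in Hq. lra. }
    apply Rmult_lt_reg_r in H0; auto. lra.
  - intros _. rewrite Hxd. replace (Cadd c (Csub q c)) with q by Cring. split.
    + exists p1, p2. reflexivity.
    + unfold q, C0. intro E. injection E. intros. contradiction.
Qed.

Lemma cnt_hit bt a n s : (s < cnt bt a n)%nat -> exists m, (m < n)%nat /\ bt m = a /\ cnt bt a m = s.
Proof.
  induction n; simpl; intros Hs. lia.
  destruct (Ceq_dec (bt n) a) as [E|E].
  - destruct (Nat.eq_dec s (cnt bt a n)) as [->|Hne].
    + exists n; auto.
    + destruct IHn as [m [H1 H2]]. lia. exists m; split; auto.
  - destruct IHn as [m [H1 H2]]. lia. exists m; split; auto.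
Qed.

Lemma cnt_unb bt a : (forall N, exists m, (N <= m)%nat /\ bt m = a) -> forall s, exists n, (s < cnt bt a n)%nat.
Proof.
  intros Hinf s. induction s.
  - destruct (Hinf O) as [m [_ Hm]]. exists (S m). simpl. destruct (Ceq_dec (bt m) a); [lia|congruence].
  - destruct IHs as [n Hn]. destruct (Hinf n) as [m [Hm1 Hm2]]. exists (S m). simpl.
    destruct (Ceq_dec (bt m) a); [|congruence]. pose proof (cnt_mono bt a n m Hm1). lia.
Qed.

Lemma all_orders bt a : (forall N, exists m, (N <= m)%nat /\ bt m = a) ->
  forall s, exists m, bt m = a /\ tt bt m = s.
Proof.
  intros Hinf s. destruct (cnt_unb bt a Hinf s) as [n Hn]. destruct (cnt_hit bt a n s Hn) as [m [_ [H1 H2]]].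
  exists m. split; auto. unfold tt. rewrite H1. auto.
Qed.

Definition G (m : nat) : Fam := Gm bseq m.

Lemma Kb_ex m : exists K, 0 <= K /\ forall s z h, Cnorm z <= INR m -> Cnorm h <= 1 ->
  Cnorm (G m s z) <= K /\ Cnorm (crem (G m) s z h) <= K * (Cnorm h * Cnorm h).
Proof. destruct (Good_Gm bseq m) as [_ HB]. apply HB. Qed.

Definition Kb m : R := proj1_sig (constructive_indefinite_description _ (Kb_ex m)).
Lemma Kb_spec m : 0 <= Kb m /\ forall s z h, Cnorm z <= INR m -> Cnorm h <= 1 ->
  Cnorm (G m s z) <= Kb m /\ Cnorm (crem (G m) s z h) <= Kb m * (Cnorm h * Cnorm h).
Proof. unfold Kb. destruct (constructive_indefinite_description _ _). simpl. auto. Qed.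

Definition eta m : R := w m / (1 + Kb m).

Definition cval (e : nat -> CC) (m : nat) : CC :=
  csl (fun l => Cmul (e l) (G l (tt bseq m) (bseq m))) m.
Definition dval (m : nat) : CC := G m (tt bseq m) (bseq m).

Definition choose (m : nat) (e : nat -> CC) : CC :=
  proj1_sig (constructive_indefinite_description _ (Cchoose (cval e m) (dval m) (eta m))).

Lemma choose_spec m e : (0 < eta m -> Cnorm (choose m e) <= eta m) /\
  (dval m <> C0 -> in_Qi (Cadd (cval e m) (Cmul (choose m e) (dval m))) /\ Cadd (cval e m) (Cmul (choose m e) (dval m)) <> C0).
Proof. unfold choose. destruct (constructive_indefinite_description _ _). simpl. auto. Qed.

Fixpoint Epre (m : nat) : nat -> CC :=
  match m with
  | O => fun _ => C0
  | S k => fun l => if Nat.eq_dec l k then choose k (Epre k) else Epre k l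
  end.

Definition eps (l : nat) : CC := Epre (S l) l.

Lemma Epre_stable m l : (l < m)%nat -> Epre m l = eps l.
Proof.
  induction m; intros Hl. lia. simpl. destruct (Nat.eq_dec l m) as [->|Hne].
  - unfold eps. simpl. destruct (Nat.eq_dec m m); [reflexivity|congruence].
  - apply IHm. lia.
Qed.

Lemma csl_ext f g n : (forall l, (l < n)%nat -> f l = g l) -> csl f n = csl g n.
Proof. induction n; intros H; simpl. reflexivity. rewrite IHn by (intros; apply H; lia). rewrite H by lia. reflexivity. Qed.

Lemma eps_eq m : eps m = choose m eps.
Proof.
  unfold eps at 1. simpl. destruct (Nat.eq_dec m m); [|congruence].
  assert (E : cval (Epre m) m = cval eps m).
  { unfold cval. apply csl_ext. intros l Hl. rewrite Epre_stable; auto. }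
  unfold choose. rewrite E. reflexivity.
Qed.

Lemma eps_small m : Cnorm (eps m) <= eta m.
Proof.
  rewrite eps_eq. apply (choose_spec m eps). unfold eta. apply Rdiv_lt_0_compat. apply w_pos.
  pose proof (proj1 (Kb_spec m)). lra.
Qed.

Lemma dval_neq m : dval m <> C0.
Proof. apply Gm_top. Qed.

Lemma eps_target m : in_Qi (Cadd (cval eps m) (Cmul (eps m) (dval m))) /\ Cadd (cval eps m) (Cmul (eps m) (dval m)) <> C0.
Proof. destruct (choose_spec m eps) as [_ H2]. rewrite <- eps_eq in H2. apply H2, dval_neq. Qed.

Definition Dfun (s : nat) (z : CC) : CC := CS (fun m => Cmul (eps m) (G m s z)).

Lemma D_value m : Dfun (tt bseq m) (bseq m) = Cadd (cval eps m) (Cmul (eps m) (dval m)).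
Proof.
  unfold Dfun. rewrite (CS_finite _ m).
  - simpl. reflexivity.
  - intros n Hn. unfold G. rewrite Gm_vanish by lia. Cring.
Qed.

Lemma nat_above R : exists N, R <= INR N.
Proof.
  destruct (archimed R) as [H _]. exists (Z.to_nat (up R)).
  destruct (Z_lt_le_dec (up R) 0) as [Hn|Hp].
  - pose proof (pos_INR (Z.to_nat (up R))). apply IZR_lt in Hn. lra.
  - rewrite INR_IZR_INZ, Z2Nat.id by lia. lra.
Qed.

Lemma eps_Kb n : Cnorm (eps n) * Kb n <= w n.
Proof.
  pose proof (eps_small n). pose proof (proj1 (Kb_spec n)). pose proof (w_pos n).
  unfold eta in H. apply Rle_trans with (w n / (1 + Kb n) * Kb n).
  apply Rmult_le_compat_r; auto.
  unfold Rdiv. rewrite Rmult_assoc. rewrite <- (Rmult_1_r (w n)) at 2. apply Rmult_le_compat_l. lra.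
  apply (Rmult_le_reg_l (1 + Kb n)). lra. rewrite <- Rmult_assoc, Rinv_r by lra. lra.
Qed.

Lemma dom_all R : exists C, 1 <= C /\ forall n s x h, Cnorm x <= R -> Cnorm h <= 1 ->
  Cnorm (Cmul (eps n) (G n s x)) <= C * w n /\
  Cnorm (Cmul (eps n) (crem (G n) s x h)) <= C * w n * (Cnorm h * Cnorm h).
Proof.
  destruct (nat_above R) as [N HN].
  assert (Hpre : forall M, exists C, 1 <= C /\ forall n s x h, (n < M)%nat -> Cnorm x <= R -> Cnorm h <= 1 ->
    Cnorm (Cmul (eps n) (G n s x)) <= C * w n /\
    Cnorm (Cmul (eps n) (crem (G n) s x h)) <= C * w n * (Cnorm h * Cnorm h)).
  { induction M.
    - exists 1. split. lra. intros; lia.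
    - destruct IHM as [C [HC1 HC]]. destruct (Good_Gm bseq M) as [_ HB]. destruct (HB R) as [K [HK HK']].
      pose proof (w_pos M). pose proof (Cnorm_nonneg (eps M)).
      exists (C + Cnorm (eps M) * K / w M). split.
      { assert (0 <= Cnorm (eps M) * K / w M) by (unfold Rdiv; apply Rmult_le_pos; [nra|left; apply Rinv_0_lt_compat; auto]). lra. }
      intros n s x h Hn Hx Hh. pose proof (Cnorm_nonneg h).
      destruct (Nat.eq_dec n M) as [->|Hne].
      + destruct (HK' s x h Hx Hh) as [B1 B2]. fold (G M) in B1, B2.
        assert (E : Cnorm (eps M) * K / w M * w M = Cnorm (eps M) * K) by (field; lra).
        assert (0 <= C * w M) by nra.
        rewrite !Cnorm_mul. split.
        * assert (Cnorm (eps M) * Cnorm (G M s x) <= Cnorm (eps M) * K) by (apply Rmult_le_compat_l; auto). nra.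
        * assert (Cnorm (eps M) * Cnorm (crem (G M) s x h) <= Cnorm (eps M) * (K * (Cnorm h * Cnorm h)))
            by (apply Rmult_le_compat_l; auto).
          assert (0 <= C * w M * (Cnorm h * Cnorm h)) by (apply Rmult_le_pos; nra). nra.
      + destruct (HC n s x h ltac:(lia) Hx Hh) as [B1 B2].
        assert (0 <= Cnorm (eps M) * K / w M) by (unfold Rdiv; apply Rmult_le_pos; [nra|left; apply Rinv_0_lt_compat; auto]).
        pose proof (w_pos n). split. nra.
        assert (0 <= Cnorm (eps M) * K / w M * w n * (Cnorm h * Cnorm h)) by (apply Rmult_le_pos; nra). nra. }
  destruct (Hpre N) as [C [HC1 HC]]. exists C. split; auto.
  intros n s x h Hx Hh. destruct (le_lt_dec N n) as [Hn|Hn].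
  - assert (Hx' : Cnorm x <= INR n) by (apply le_INR in Hn; lra).
    destruct (proj2 (Kb_spec n) s x h Hx' Hh) as [B1 B2].
    pose proof (eps_Kb n). pose proof (Cnorm_nonneg (eps n)). pose proof (w_pos n). pose proof (Cnorm_nonneg h).
    rewrite !Cnorm_mul. split.
    + assert (Cnorm (eps n) * Cnorm (G n s x) <= Cnorm (eps n) * Kb n) by (apply Rmult_le_compat_l; auto). nra.
    + assert (Cnorm (eps n) * Cnorm (crem (G n) s x h) <= Cnorm (eps n) * (Kb n * (Cnorm h * Cnorm h)))
        by (apply Rmult_le_compat_l; auto).
      assert (0 <= Cnorm h * Cnorm h) by nra.
      assert (Cnorm (eps n) * (Kb n * (Cnorm h * Cnorm h)) = (Cnorm (eps n) * Kb n) * (Cnorm h * Cnorm h)) by ring.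
      assert ((Cnorm (eps n) * Kb n) * (Cnorm h * Cnorm h) <= w n * (Cnorm h * Cnorm h)) by (apply Rmult_le_compat_r; auto).
      assert (w n * (Cnorm h * Cnorm h) <= C * w n * (Cnorm h * Cnorm h)).
      { rewrite Rmult_assoc. rewrite <- (Rmult_1_l (w n * _)) at 1. apply Rmult_le_compat_r; nra. }
      lra.
  - apply HC; auto.
Qed.

Lemma D_deriv s z : Cderiv_at (Dfun s) z (Dfun (S s) z).
Proof.
  destruct (dom_all (Cnorm z + 1)) as [C [HC1 HC]].
  unfold Dfun. apply (CS_deriv (fun n x => Cmul (eps n) (G n s x)) (fun n x => Cmul (eps n) (G n (S s) x)) z C).
  - intros h Hh n. refine (proj1 (HC n s (Cadd z h) C0 _ _)).
    pose proof (Cnorm_triangle z h); lra. rewrite Cnorm_C0; lra.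
  - intros n. refine (proj1 (HC n s z C0 _ _)). lra. rewrite Cnorm_C0; lra.
  - intros n. refine (proj1 (HC n (S s) z C0 _ _)). lra. rewrite Cnorm_C0; lra.
  - intros h Hh n. destruct (HC n s z h ltac:(lra) Hh) as [_ B].
    replace (Csub (Csub (Cmul (eps n) (G n s (Cadd z h))) (Cmul (eps n) (G n s z))) (Cmul (Cmul (eps n) (G n (S s) z)) h))
      with (Cmul (eps n) (crem (G n) s z h)); auto.
    unfold crem. generalize (eps n) (G n s (Cadd z h)) (G n s z) (G n (S s) z). intros. Cring.
Qed.

Lemma hit s z : algebraic z -> exists m, bseq m = z /\ tt bseq m = s.
Proof.
  intros Hz. destruct (alg_enum_surj z Hz) as [n Hn]. subst z.
  apply all_orders. intros N. destruct (bseq_inf n N) as [m Hm]. exists m; auto.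
Qed.

Lemma D_good s z : algebraic z -> in_Qi (Dfun s z) /\ Dfun s z <> C0.
Proof.
  intros Hz. destruct (hit s z Hz) as [m [<- <-]]. rewrite D_value. apply eps_target.
Qed.

Lemma alg0 : algebraic C0.
Proof.
  exists (0%Z :: 1%Z :: nil). split.
  - exists 1%Z. split. simpl; auto. lia.
  - simpl. Cring.
Qed.

Theorem corollary3 :
  exists f : CC -> CC, transcendental_entire f /\
    exists D : nat -> CC -> CC, derivs_of f D /\
      forall (s : nat) (z : CC), algebraic z -> in_Qi (D s z).
Proof.
  exists (Dfun O). split.
  - split.
    + intro z. exists (Dfun 1 z). apply D_deriv.
    + intros [cs Hcs].
      assert (E : forall s z, Dfun s z = polyFam cs s z).
      { induction s; intro z.
        - rewrite polyFam_eval. apply Hcs.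
        - apply (Cderiv_unique (Dfun s) z). apply D_deriv.
          replace (Dfun s) with (polyFam cs s) by (apply functional_extensionality; intro; auto).
          apply Good_deriv, polyFam_good. }
      destruct (polyFam_good cs) as [[N HN] _].
      apply (proj2 (D_good N C0 alg0)). rewrite E. apply HN. lia.
  - exists Dfun. split.
    + split. reflexivity. intros; apply D_deriv.
    + intros s z Hz. apply D_good, Hz.
Qed.
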